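(* Let $I\subsetneq S$ be a monomial ideal. If $I$ is $k$-clean for some integer $k\ge 0$, then $S/I$ is clean. Conversely, if $S/I$ is clean, then $I$ is $k$-clean for some integer $k\geq 0$.
   Context: $S=K[x_1,\dots,x_n]$ is a polynomial ring over a field $K$. For a monomial $u=x_1^{a_1}\cdots x_n^{a_n}$, $\mathrm{supp}(u)=\{i: a_i>0\}$. For an ideal $I$, $\min(I)$ denotes the set of prime ideals of $S$ that are minimal among primes containing $I$. A monomial $u\neq 1$ with $u\notin I$ is a cleaner monomial of the monomial ideal $I$ if $\min(I+Su)\subseteq \min(I)$. For an integer $k\ge 0$, the class of $k$-clean monomial ideals is defined recursively (as the smallest class closed under the following rule): a proper monomial ideal $I$ is $k$-clean if either $I$ is a prime ideal, or $I$ has no embedded prime ideals (i.e. $\mathrm{Ass}(S/I)=\min(I)$) and there exists a cleaner monomial $u$ of $I$ with $|\mathrm{supp}(u)|\le k+1$ such that both $I:u$ and $I+Su$ are $k$-clean. $S/I$ is clean if there is a chain of $\mathbb{Z}^n$-graded submodules $0=M_0\subset M_1\subset\cdots\subset M_r=S/I$ with multigraded isomorphisms $M_i/M_{i-1}\cong (S/P_i)(-\mathbf{a}_i)$ for some $\mathbf a_i\in\mathbb Z^n$ and monomial prime ideals $P_i$, such that $\{P_1,\dots,P_r\}\subseteq \min(I)$. *)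

(* Defs.v *)
From HB Require Import structures.
From mathcomp Require Import all_boot all_order all_algebra.
From mathcomp Require Import mpoly.
Set Implicit Arguments. Unset Strict Implicit. Unset Printing Implicit Defensive.
Import Order.TTheory GRing.Theory Num.Theory.
Local Open Scope ring_scope.

Section Defs.
Variables (K : fieldType) (n : nat).

Local Notation S := {mpoly K[n]}.

Local Notation subS := (S -> Prop).

Definition incl (A B : subS) : Prop := forall f, A f -> B f.

Definition is_idealS (I : subS) : Prop :=
  [/\ I 0, (forall f g, I f -> I g -> I (f + g)) &
      (forall r f, I f -> I (r * f))].

Definition proper_idealS (I : subS) : Prop := is_idealS I /\ ~ I 1.

Definition gen_by_monomials (G : 'X_{1..n} -> Prop) : subS :=
  fun f => exists s : seq (S * 'X_{1..n}),
      (forall p, p \in s -> G p.2) /\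
      f = \sum_(p <- s) p.1 * 'X_[p.2].

Definition monomial_ideal (I : subS) : Prop :=
  exists G, forall f, I f <-> gen_by_monomials G f.

Definition prime_idealS (P : subS) : Prop :=
  [/\ is_idealS P, ~ P 1 & (forall f g, P (f * g) -> P f \/ P g)].

Definition min_prime (I P : subS) : Prop :=
  [/\ prime_idealS P, incl I P &
      (forall Q, prime_idealS Q -> incl I Q -> incl Q P -> incl P Q)].

Definition ass_prime (I P : subS) : Prop :=
  prime_idealS P /\ exists f : S, forall g, P g <-> I (g * f).

Definition no_embedded (I : subS) : Prop :=
  forall P, ass_prime I P <-> min_prime I P.

Definition sum_mono (I : subS) (m : 'X_{1..n}) : subS :=
  fun f => exists g h, I g /\ f = g + h * 'X_[m].

Definition colon_mono (I : subS) (m : 'X_{1..n}) : subS :=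
  fun f => I (f * 'X_[m]).

Definition msupp_set (m : 'X_{1..n}) : {set 'I_n} := [set i | (m i != 0)%N].

Definition cleaner (I : subS) (m : 'X_{1..n}) : Prop :=
  [/\ m != 0%MM, ~ I 'X_[m] &
      (forall P, min_prime (sum_mono I m) P -> min_prime I P)].

Inductive kclean (k : nat) : subS -> Prop :=
| kclean_prime (I : subS) :
    monomial_ideal I -> proper_idealS I -> prime_idealS I -> kclean k I
| kclean_step (I : subS) (m : 'X_{1..n}) :
    monomial_ideal I -> proper_idealS I -> no_embedded I ->
    cleaner I m -> (#|msupp_set m| <= k.+1)%N ->
    kclean k (colon_mono I m) -> kclean k (sum_mono I m) -> kclean k I.

(* Z^n-graded submodules of S/I are the J/I with J an ideal containing I
   which is homogeneous: with every f it contains all its homogeneous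
   components f@_b x^b. *)
Definition graded_ideal (J : subS) : Prop :=
  is_idealS J /\ forall f b, J f -> J (f@_b *: 'X_[b]).

(* x^d for d in Z^n if d in N^n, and 0 otherwise
   (the degree-d component of S is K x^d, resp. 0) *)
Definition monoZ (d : 'I_n -> int) : S :=
  if [forall i, (0 <= d i)%R] then 'X_[[multinom `|d i|%N | i < n]] else 0.

(* Multigraded isomorphism (S/P)(-a) ~= B/A (A \subseteq B ideals):
   phi : S -> B is an S-linear map modulo A, with kernel (mod A) exactly P
   (so it induces an injective map S/P -> B/A), surjective onto B/A, and
   homogeneous of degree 0 from (S/P)(-a): the class of x^b (degree b + a in
   (S/P)(-a)) is sent to an element of degree b + a of B/A. *)
Definition graded_iso (A B P : subS) (a : 'I_n -> int) : Prop :=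
  exists phi : S -> S,
    [/\ (forall f, B (phi f)),
        (forall f g, A (phi (f + g) - (phi f + phi g))),
        (forall r f, A (phi (r * f) - r * phi f)),
        (forall f, A (phi f) <-> P f) /\
        (forall g, B g -> exists f, A (g - phi f)) &
        forall b : 'X_{1..n}, exists c : K,
          A (phi 'X_[b] - c *: monoZ (fun i => (b i)%:Z + a i))].

(* S/I is clean: a chain I = J_0 \subseteq ... \subseteq J_r = S of graded
   ideals (i.e. graded submodules M_i = J_i/I of S/I) with
   J_(i+1)/J_i ~= (S/P_i)(-a_i), P_i a monomial prime in min(I). *)
Definition clean (I : subS) : Prop :=
  exists (r : nat) (J : nat -> subS) (P : nat -> subS) (a : nat -> 'I_n -> int),
    [/\ (forall f, J 0%N f <-> I f),
        (forall f, J r f),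
        (forall i, (i <= r)%N -> graded_ideal (J i)),
        (forall i, (i < r)%N -> incl (J i) (J i.+1)) &
        forall i, (i < r)%N ->
          [/\ monomial_ideal (P i), min_prime I (P i) &
              graded_iso (J i) (J i.+1) (P i) (a i)]].

End Defs.

(* Main.v *)
Require Import Defs.
From HB Require Import structures.
From mathcomp Require Import all_boot all_order all_algebra.
From mathcomp Require Import mpoly.
From mathcomp Require Import ring zify.
From Stdlib Require Import Classical.
Set Implicit Arguments. Unset Strict Implicit. Unset Printing Implicit Defensive.
Import Order.TTheory GRing.Theory Num.Theory.
Local Open Scope ring_scope.

Lemma min_least (Pr : nat -> Prop) :
  (exists t, Pr t) -> exists i, Pr i /\ forall s, (s < i)%N -> ~ Pr s.
Proof.
move=> [t Ht]; apply: NNPP => H.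
suff: forall k s, (s <= k)%N -> ~ Pr s by move/(_ t t (leqnn t)).
elim=> [|k IH] s.
  rewrite leqn0 => /eqP -> H0; apply: H; exists 0%N; split=> // s'; by [].
rewrite leq_eqVlt => /orP [/eqP ->|]; last exact: IH.
move=> Hk; apply: H; exists k.+1; split=> // s' Hs'; apply: IH; by [].
Qed.

Section Pf.
Variables (K : fieldType) (n : nat).
Local Notation S := {mpoly K[n]}.
Implicit Types (I A B Q : S -> Prop) (f g h : S).

Lemma id0 I : is_idealS I -> I 0.
Proof. by case. Qed.
Lemma idD I f g : is_idealS I -> I f -> I g -> I (f + g).
Proof. by case=> _ HD _; apply: HD. Qed.
Lemma idM I r f : is_idealS I -> I f -> I (r * f).
Proof. by case=> _ _ HM; apply: HM. Qed.
Lemma idMr I r f : is_idealS I -> I f -> I (f * r).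
Proof. by move=> HI Hf; rewrite mulrC; apply: idM. Qed.
Lemma idN I f : is_idealS I -> I f -> I (- f).
Proof. by move=> HI Hf; rewrite -mulN1r; apply: idM. Qed.
Lemma idB I f g : is_idealS I -> I f -> I g -> I (f - g).
Proof. by move=> HI Hf Hg; apply: idD => //; apply: idN. Qed.
Lemma id_diff I f g : is_idealS I -> I (f - g) -> (I f <-> I g).
Proof.
move=> HI Hd; split=> H.
  have -> : g = f - (f - g) by ring.
  exact: idB.
have -> : f = (f - g) + g by rewrite subrK.
exact: idD.
Qed.

Lemma prime_ideal (P : S -> Prop) : prime_idealS P -> is_idealS P.
Proof. by case. Qed.

Definition chain I r (J P : nat -> S -> Prop) (a : nat -> 'I_n -> int) :=
    [/\ (forall f, J 0%N f <-> I f),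
        (forall f, J r f),
        (forall i, (i <= r)%N -> graded_ideal (J i)),
        (forall i, (i < r)%N -> incl (J i) (J i.+1)) &
        forall i, (i < r)%N ->
          [/\ monomial_ideal (P i), min_prime I (P i) &
              graded_iso (J i) (J i.+1) (P i) (a i)]].

Lemma cleanE I : clean I <-> exists r J P a, chain I r J P a.
Proof. by []. Qed.

Section Iso.
Variables (A B P : S -> Prop) (a : 'I_n -> int).
Hypotheses (GI : graded_iso A B P a) (HA : is_idealS A) (HP : is_idealS P).

Lemma iso_PJ g f : P g -> B f -> A (g * f).
Proof.
case: GI => phi [HB Hadd Hmul [Hker Hsurj] _] Pg Bf.
have [h Hh] := Hsurj f Bf.
have E : g * f = g * (f - phi h) - (phi (g * h) - g * phi h) + phi (g * h).
  by ring.
rewrite E; apply: idD => //; last by apply: (proj2 (Hker _)); apply: idMr.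
apply: idB => //; exact: idM.
Qed.

Lemma iso_AP : incl A P.
Proof.
case: GI => phi [HB Hadd Hmul [Hker Hsurj] _] g Ag.
rewrite -[g]mulr1; apply/Hker.
apply/(id_diff HA (Hmul g 1)); exact: idMr.
Qed.
End Iso.

Lemma chain_ideal I r J P a i : chain I r J P a -> (i <= r)%N -> is_idealS (J i).
Proof. by case=> _ _ HG _ _ Hi; case: (HG i Hi). Qed.

Lemma chain_P I r J P a i : chain I r J P a -> (i < r)%N ->
  [/\ prime_idealS (P i), min_prime I (P i), is_idealS (P i) &
      graded_iso (J i) (J i.+1) (P i) (a i)].
Proof.
case=> _ _ _ _ HP Hi; have [_ Hm Hg] := HP i Hi.
by case: (Hm) => Hp _ _; split=> //; case: Hp.
Qed.

Lemma chain_incl I r J P a i j : chain I r J P a -> (i <= j)%N -> (j <= r)%N ->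
  incl (J i) (J j).
Proof.
move=> C Hij; elim: j Hij => [|j IH].
  by rewrite leqn0 => /eqP -> _ f.
rewrite leq_eqVlt => /orP [/eqP -> _ f //|Hij Hj f Hf].
case: C => _ _ _ HI _; apply: HI => //; apply: IH => //; exact: ltnW.
Qed.

Lemma contains_some I r J P a Q : chain I r J P a -> prime_idealS Q -> incl I Q ->
  exists t, (t < r)%N /\ incl (P t) Q.
Proof.
move=> C HQ IQ; apply: NNPP => H.
suff: forall s, (s <= r)%N -> forall x, J s x -> Q x.
  by move/(_ r (leqnn r) 1); case: C => _ Hr _ _ _; case: HQ => _ HQ1 _ /(_ (Hr 1)).
elim=> [|s IH] Hs x Hx.
  by apply: IQ; case: C => H0 _ _ _ _; apply/H0.
have Hsr : (s < r)%N by [].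
have [z [Pz Qz]] : exists z, P s z /\ ~ Q z.
  apply: NNPP => H2; apply: H; exists s; split=> // z Pz.
  by apply: NNPP => Qz; apply: H2; exists z.
have [Pp _ Pi Gi] := chain_P C Hsr.
have : Q (z * x).
  apply: IH; first exact: ltnW.
  apply: (iso_PJ Gi) => //; exact: chain_ideal C (ltnW Hsr).
by case: HQ => _ _ HQ /HQ [] // /Qz.
Qed.

Lemma ass_of_min I r J P a (P' : S -> Prop) : chain I r J P a -> min_prime I P' -> ass_prime I P'.
Proof.
move=> C [HP' IP' minP'].
have [t [Ht Pt]] := contains_some C HP' IP'.
have [i [[Hi Pi] Hmin]] := min_least (ex_intro (fun t => (t < r)%N /\ incl (P t) P') t (conj Ht Pt)).
have HI0 : forall x, J 0%N x -> I x by case: C => H0 _ _ _ _ x /H0.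
have Hy : forall s, (s <= i)%N -> exists y, ~ P' y /\ forall x, J s x -> I (y * x).
  elim=> [|s IH] Hs.
    exists 1; split; first by case: HP' => _ ? _.
    by move=> x; rewrite mul1r; apply: HI0.
  have Hsi : (s < i)%N by [].
  have [y [Py Hy]] := IH (ltnW Hsi).
  have Hsr : (s < r)%N := ltn_trans Hsi Hi.
  have [z [Pz Qz]] : exists z, P s z /\ ~ P' z.
    apply: NNPP => H2; apply: (Hmin s Hsi); split=> // z Pz.
    by apply: NNPP => Qz; apply: H2; exists z.
  have [_ _ Psi Gs] := chain_P C Hsr.
  exists (y * z); split.
    by case: HP' => _ _ /(_ y z) HH /HH [].
  move=> x Hx; rewrite -mulrA; apply: Hy.
  apply: (iso_PJ Gs) => //; exact: chain_ideal C (ltnW Hsr).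
have [y [Py Hy']] := Hy i (leqnn i).
have [Ppi [_ IPi _] Pii Gi] := chain_P C Hi.
have P'Pi : incl P' (P i) by apply: minP'.
have HJi := chain_ideal C (ltnW Hi).
case: Gi => phi [HB Hadd Hmul [Hker Hsurj] _].
split=> //; exists (y * phi 1) => f; split=> Hf.
  rewrite mulrCA; apply: Hy'.
  have := Hmul f 1; rewrite mulr1 => Hd.
  by apply/(id_diff HJi Hd)/Hker; apply: P'Pi.
have Hfy : P' (f * y).
  apply: Pi; apply/Hker.
  have := Hmul (f * y) 1; rewrite mulr1 => Hd.
  apply/(id_diff HJi Hd); rewrite -mulrA.
  by apply: (chain_incl C (leq0n i) (ltnW Hi)); case: C => H0 _ _ _ _; apply/H0.
by case: HP' => _ _ /(_ f y Hfy) [].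
Qed.

Lemma ass_in_min I r J P a (P' : S -> Prop) : chain I r J P a -> ass_prime I P' -> min_prime I P'.
Proof.
move=> C [HP' [f Hf]].
have HI0 : forall x, J 0%N x <-> I x by case: C.
have nIf : ~ I f by move=> If; case: HP' => _ H1 _; apply/H1/Hf; rewrite mul1r.
have Jrf : J r f by case: C.
have [s0 [Js0 Hs0]] := min_least (ex_intro (fun s => J s f) r Jrf).
have s0r : (s0 <= r)%N by rewrite leqNgt; apply/negP => /Hs0.
case: s0 Js0 Hs0 s0r => [/HI0 //|t] Jtf Hmin Htr.
have nJt : ~ J t f by apply: Hmin.
have [Ppt [Pt IPt minPt] Pti Gt] := chain_P C Htr.
have HJt := chain_ideal C (ltnW Htr).
have IJt := chain_incl C (leq0n t) (ltnW Htr).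
have IP' : incl I P'.
  move=> g Ig; apply: (proj2 (Hf _)); apply/HI0; apply: idMr; [exact: chain_ideal C (leq0n r) | exact/HI0].
have P'Pt : incl P' (P t).
  case: Gt => phi [HB Hadd Hmul [Hker Hsurj] _] g Pg.
  have [h Hh] := Hsurj f Jtf.
  have nPh : ~ P t h.
    move/Hker => Jh; apply: nJt; apply/(id_diff HJt Hh); exact: Jh.
  have : P t (g * h).
    apply/Hker.
    have E : phi (g * h) = (phi (g * h) - g * phi h) - g * (f - phi h) + g * f.
      by ring.
    rewrite E; apply: idD => //; last by apply: IJt; apply/HI0/Hf.
    apply: idB => //; exact: idM.
  by case: Ppt => _ _ /(_ g h) HH /HH [].
have [s [Hs PsP']] := contains_some C HP' IP'.
have [Pps [_ IPs _] _ _] := chain_P C Hs.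
have PtP' : incl (P t) P'.
  have : incl (P t) (P s) by apply: minPt => //; move=> g /PsP' /P'Pt.
  by move=> H g /H /PsP'.
split=> // Q HQ IQ QP'.
have QPt : incl Q (P t) by move=> g /QP' /P'Pt.
have PtQ := minPt Q HQ IQ QPt.
by move=> g /P'Pt /PtQ.
Qed.

Lemma HXf h m b : (h * 'X_[m])@_b *: 'X_[b] =
  (if (m <= b)%MM then h@_(b - m) *: 'X_[b - m] else 0) * 'X_[m] :> S.
Proof.
case: ifP => Hmb.
  have E1 : (h * 'X_[m])@_b = h@_(b - m) by rewrite -{1}(submK Hmb) addmC mcoeffMX.
  have E2 : 'X_[b] = 'X_[b - m] * 'X_[m] :> S by rewrite -mpolyXD submK.
  by rewrite E1 E2 scalerAl.
have -> : (h * 'X_[m])@_b = 0.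
  apply/eqP; rewrite mcoeff_eq0; apply/negP.
  rewrite (perm_mem (msuppMX h m)) => /mapP [m' _ Eb].
  by move: Hmb; rewrite Eb lem_addr.
by rewrite scale0r mul0r.
Qed.

Lemma gbm_ideal G : is_idealS (gen_by_monomials (K := K) (n := n) G).
Proof.
split.
- by exists [::]; split=> //; rewrite big_nil.
- move=> f g [s1 [H1 ->]] [s2 [H2 ->]]; exists (s1 ++ s2); split; last by rewrite big_cat.
  by move=> p; rewrite mem_cat => /orP [/H1|/H2].
- move=> r f [s [Hs ->]]; exists [seq (r * p.1, p.2) | p <- s]; split.
    by move=> p /mapP [q Hq ->]; exact: Hs q Hq.
  rewrite big_map mulr_sumr; apply: eq_bigr => p _ /=; by rewrite mulrA.
Qed.

Lemma gbm_graded G f b : gen_by_monomials G f ->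
  gen_by_monomials (K := K) (n := n) G (f@_b *: 'X_[b]).
Proof.
move=> [s [Hs ->]].
exists [seq ((if (p.2 <= b)%MM then p.1@_(b - p.2) *: 'X_[b - p.2] else 0), p.2) | p <- s].
split; first by move=> p /mapP [q Hq ->]; exact: Hs q Hq.
rewrite big_map raddf_sum scaler_suml; apply: eq_bigr => p _ /=; by rewrite HXf.
Qed.

Lemma mono_ideal I : monomial_ideal I -> is_idealS I.
Proof.
move=> [G HG]; have [H0 HD HM] := gbm_ideal G; split.
- by apply/HG.
- by move=> f g /HG Hf /HG Hg; apply/HG; apply: HD.
- by move=> r f /HG Hf; apply/HG; apply: HM.
Qed.

Lemma mono_graded I : monomial_ideal I -> graded_ideal I.
Proof.
move=> HI; split; first exact: mono_ideal.
by case: HI => G HG f b /HG Hf; apply/HG; apply: gbm_graded.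
Qed.

Lemma sum_mono_monomial I m : monomial_ideal I -> monomial_ideal (sum_mono I m).
Proof.
move=> HI; have HId := mono_ideal HI.
case: HI => G HG; exists (fun e => G e \/ e = m) => f; split.
  move=> [g [h [/HG [s [Hs Eg]] ->]]]; exists ((h, m) :: s); split.
    by move=> p; rewrite in_cons => /orP [/eqP -> | /Hs]; [right | left].
  by rewrite big_cons Eg addrC.
move=> [s [Hs ->]]; elim: s Hs => [|p s IH] Hs.
  by exists 0, 0; split; [exact: id0 | rewrite big_nil mul0r addr0].
have [g [h [Ig Eg]]] : sum_mono I m (\sum_(p0 <- s) p0.1 * 'X_[p0.2]).
  by apply: IH => q Hq; apply: Hs; rewrite in_cons Hq orbT.
rewrite big_cons Eg.
case: (Hs p (mem_head _ _)) => [Gp|Ep].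
  exists (p.1 * 'X_[p.2] + g), h; split; last by rewrite addrA.
  apply: idD => //; apply/HG; exists [:: p]; split.
    by move=> q; rewrite mem_seq1 => /eqP ->.
  by rewrite big_seq1.
exists g, (p.1 + h); split=> //; rewrite Ep; ring.
Qed.

Definition sumJ I (A : S -> Prop) m : S -> Prop :=
  fun f => exists g h, I g /\ A h /\ f = g + h * 'X_[m].

Lemma sumJ_ideal I A m : is_idealS I -> is_idealS A -> is_idealS (sumJ I A m).
Proof.
move=> HI HA; split.
- by exists 0, 0; split; [exact: id0 | split; [exact: id0 | rewrite mul0r addr0]].
- move=> f1 f2 [g1 [h1 [I1 [A1 ->]]]] [g2 [h2 [I2 [A2 ->]]]].
  exists (g1 + g2), (h1 + h2); split; first exact: idD.
  split; first exact: idD. ring.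
- move=> r f [g [h [Ig [Ah ->]]]]; exists (r * g), (r * h); split; first exact: idM.
  split; first exact: idM. ring.
Qed.

Lemma sumJ_graded I A m : graded_ideal I -> graded_ideal A -> graded_ideal (sumJ I A m).
Proof.
move=> [HI GI] [HA GA]; split; first exact: sumJ_ideal.
move=> f b [g [h [Ig [Ah ->]]]].
rewrite mcoeffD scalerDl HXf.
exists (g@_b *: 'X_[b]), (if (m <= b)%MM then h@_(b - m) *: 'X_[b - m] else 0).
split; first exact: GI. split=> //.
by case: ifP => _; [apply: GA | apply: id0].
Qed.

Lemma monoZ_pos (d : 'I_n -> int) : [forall i, (0 <= d i)%R] ->
  monoZ K d = 'X_[[multinom `|d i|%N | i < n]].
Proof. by rewrite /monoZ => ->. Qed.

Lemma monoZ_neg (d : 'I_n -> int) : ~~ [forall i, (0 <= d i)%R] -> monoZ K d = 0.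
Proof. by rewrite /monoZ => /negbTE ->. Qed.

Lemma monoZ_shift (b : 'X_{1..n}) (a : 'I_n -> int) (m : 'X_{1..n}) :
  [forall i, (0 <= (b i)%:Z + a i)%R] ->
  monoZ K (fun i => (b i)%:Z + (a i + (m i)%:Z)) =
  monoZ K (fun i => (b i)%:Z + a i) * 'X_[m].
Proof.
move=> H0; have H := forallP H0.
have H' : [forall i, (0 <= (b i)%:Z + (a i + (m i)%:Z))%R].
  by apply/forallP => i; rewrite addrA; apply: addr_ge0.
rewrite (monoZ_pos H') (monoZ_pos H0) -(mpolyXD K); congr mpolyX; apply/mnmP => i.
rewrite mnmDE !mnmE; move: (H i); rewrite addrA.
case: (_ + a i) => // k _; by [].
Qed.

Lemma monoZ_id (b : 'X_{1..n}) : monoZ K (fun i => (b i)%:Z + 0) = 'X_[b].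
Proof.
rewrite monoZ_pos; last by apply/forallP => i; rewrite addr0.
by congr 'X_[_]; apply/mnmP => i; rewrite mnmE addr0.
Qed.

Lemma msupp_card (m : 'X_{1..n}) : (#|msupp_set m| <= n.+1)%N.
Proof. by apply: leq_trans (max_card _) _; rewrite card_ord. Qed.


Lemma idZ I c f : is_idealS I -> I f -> I (c *: f).
Proof. by move=> HI Hf; rewrite -mul_mpolyC; apply: idM. Qed.

Lemma ideal_ext I I' : (forall f, I f <-> I' f) -> is_idealS I -> is_idealS I'.
Proof.
move=> E [H0 HD HM]; split.
- by apply/E.
- by move=> f g /E Hf /E Hg; apply/E; apply: HD.
- by move=> r f /E Hf; apply/E; apply: HM.
Qed.

Lemma prime_ext I I' : (forall f, I f <-> I' f) -> prime_idealS I -> prime_idealS I'.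
Proof.
move=> E [HI H1 HP]; split.
- exact: ideal_ext E HI.
- by move/E.
- by move=> f g /E /HP [] Hf; [left|right]; apply/E.
Qed.

Lemma min_prime_ext I P P' : (forall f, P f <-> P' f) -> min_prime I P -> min_prime I P'.
Proof.
move=> E [HP IP minP]; split.
- exact: prime_ext E HP.
- by move=> f /IP /E.
- move=> Q HQ IQ QP' f /E Pf.
  by apply: (minP Q HQ IQ) => // g /QP' /E.
Qed.

Lemma monomial_ext I I' : (forall f, I f <-> I' f) -> monomial_ideal I -> monomial_ideal I'.
Proof. by move=> E [G HG]; exists G => f; rewrite -E. Qed.

Lemma dirB r : forall I J P a, monomial_ideal I -> proper_idealS I ->
  chain I r J P a -> kclean n I.
Proof.
elim: r => [|r IH] I J P a HI HprI C.
  by case: HprI => _ []; case: C => H0 Hr _ _ _; apply/H0.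
case: (classic (prime_idealS I)) => Hp; first by apply: kclean_prime.
have HId := mono_ideal HI.
have [Pp0 [_ IP0 minP0] Pi0 G0] := chain_P C (ltn0Sn r).
have J0 : forall f, J 0%N f <-> I f by case: C.
have HJ0 := chain_ideal C (leq0n r.+1).
have HJ1 := chain_ideal C (ltn0Sn r).
have IJ01 : incl (J 0%N) (J 1%N) := chain_incl C (leq0n 1) (ltn0Sn r).
have G0' := G0.
case: G0 => phi [HB Hadd Hmul [Hker Hsurj] Hdeg].
have [c0 Hc0] := Hdeg 0%MM.
rewrite mpolyX0 in Hc0.
have nP01 : ~ P 0%N 1 by case: Pp0.
case Hpos : [forall i, (0 <= ((0%MM : 'X_{1..n}) i)%:Z + a 0%N i)%R]; last first.
  exfalso; apply: nP01; apply/Hker.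
  by move: Hc0; rewrite monoZ_neg ?Hpos // scaler0 subr0.
rewrite monoZ_pos // in Hc0.
set m := [multinom _ | i < n] in Hc0.
set u : S := 'X_[m] in Hc0.
have c0n0 : c0 != 0.
  apply/negP => /eqP c00; apply: nP01; apply/Hker.
  by move: Hc0; rewrite c00 scale0r subr0.
have key : forall g, J 0%N (phi g - g * (c0 *: u)).
  move=> g.
  have E : phi g - g * (c0 *: u) = (phi (g * 1) - g * phi 1) + g * (phi 1 - c0 *: u).
    by rewrite mulr1 mulrBr addrA subrK.
  rewrite E; apply: idD => //; exact: idM.
have colonE : forall g, colon_mono I m g <-> P 0%N g.
  move=> g; rewrite /colon_mono -/u; split.
    move=> Hg; apply/Hker; apply/(id_diff HJ0 (key g)).
    by rewrite -scalerAr; apply: idZ => //; apply/J0.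
  move/Hker/(id_diff HJ0 (key g)) => H.
  have -> : g * u = c0^-1 *: (g * (c0 *: u)) by rewrite -scalerAr scalerA mulVf // scale1r.
  by apply/J0; apply: idZ.
have J1E : forall g, J 1%N g <-> sum_mono I m g.
  move=> g; split.
    move=> Hg; have [h Hh] := Hsurj g Hg.
    exists ((g - phi h) + (phi h - h * (c0 *: u))), (c0 *: h); split.
      by apply/J0; apply: idD => //.
    rewrite -/u -scalerAl scalerAr; by rewrite addrA subrK subrK.
  move=> [g' [h [Ig ->]]]; apply: idD => //; first by apply: IJ01; apply/J0.
  apply: idM => //.
  have -> : 'X_[m] = c0^-1 *: (phi 1 - (phi 1 - c0 *: u)) :> S.
    by rewrite opprB addrC subrK scalerA mulVf // scale1r.
  apply: idZ => //; apply: idB => //; exact: IJ01.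
have mn0 : m != 0%MM.
  apply/negP => /eqP m0; apply: Hp; apply: (prime_ext _ Pp0) => g.
  by rewrite -colonE /colon_mono m0 mpolyX0 mulr1.
have nIu : ~ I 'X_[m].
  by move=> Iu; apply: nP01; apply/colonE; rewrite /colon_mono mul1r.
have HsumI : monomial_ideal (sum_mono I m) := sum_mono_monomial m HI.
have Isum : incl I (sum_mono I m).
  by move=> g Ig; exists g, 0; rewrite mul0r addr0.
have C' : chain (sum_mono I m) r (fun i => J i.+1) (fun i => P i.+1) (fun i => a i.+1).
  case: (C) => H0 Hr HG HI' HP; split.
  - exact: J1E.
  - exact: Hr.
  - by move=> i Hi; apply: HG.
  - by move=> i Hi; apply: HI'.
  move=> i Hi; have [Hm Hmin Hgi] := HP i.+1 Hi; split=> //.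
  have [Ppi _ Pii Gi] := @chain_P _ _ _ _ _ i.+1 C Hi.
  have sumP : incl (sum_mono I m) (P i.+1).
    move=> g /J1E Hg; apply: (iso_AP Gi) => //; first exact: (@chain_ideal _ _ _ _ _ i.+1 C (ltnW Hi)).
    by apply: (chain_incl C (_ : (1 <= i.+1)%N) (ltnW Hi)).
  case: Hmin => HPp _ minP; split=> // Q HQ IQ QP.
  by apply: minP => // g /Isum /IQ.
have Hpr_sum : proper_idealS (sum_mono I m).
  split; first exact: mono_ideal.
  move/J1E => J11; apply: Hp; apply: (prime_ext _ Pp0) => g; split; last exact: IP0.
  move=> Pg; apply/J0; rewrite -[g]mulr1; exact: (iso_PJ G0').
apply: (@kclean_step _ _ n I m) => //.
- move=> P'; split; [exact: ass_in_min C | exact: ass_of_min C].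
- split=> // P' [HP' sP' minP'].
  have [t [Ht PtP']] := contains_some C' HP' sP'.
  have [_ [HPt sPt _] _ _] := chain_P C' Ht.
  have P'Pt : incl P' (P t.+1) by apply: minP'.
  have [_ Hmin _ _] := @chain_P _ _ _ _ _ t.+1 C Ht.
  by apply: (min_prime_ext _ Hmin) => g; split; [apply: PtP'|apply: P'Pt].
- exact: msupp_card.
- apply: kclean_prime.
  + by apply: (monomial_ext _ (_ : monomial_ideal (P 0%N))) => [g|]; [rewrite colonE|case: C => _ _ _ _ /(_ 0%N (ltn0Sn r)) []].
  + split; first by apply: (ideal_ext _ Pi0) => g; rewrite colonE.
    by move/colonE.
  + by apply: (prime_ext _ Pp0) => g; rewrite colonE.
- exact: IH HsumI Hpr_sum C'.
Qed.


Lemma iso_shift I A B (B' P : S -> Prop) a (m : 'X_{1..n}) :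
  is_idealS I -> is_idealS A -> (forall f, I (f * 'X_[m]) -> A f) ->
  graded_iso A B P a -> (forall f, B' f <-> sumJ I B m f) ->
  graded_iso (sumJ I A m) B' P (fun j => a j + (m j)%:Z).
Proof.
move=> HI HA colA [phi [HB Hadd Hmul [Hker Hsurj] Hdeg]] EB.
exists (fun f => phi f * 'X_[m]); split.
- move=> f; apply/EB; exists 0, (phi f); split; first exact: id0.
  by split; [apply: HB | rewrite add0r].
- move=> f g; exists 0, (phi (f + g) - (phi f + phi g)); split; first exact: id0.
  split=> //; ring.
- move=> r f; exists 0, (phi (r * f) - r * phi f); split; first exact: id0.
  split=> //; ring.
- split.
    move=> f; split; last first.
      by move/Hker => H; exists 0, (phi f); split; [exact: id0|split=> //; rewrite add0r].
    move=> [g [h [Ig [Ah E]]]]; apply/Hker.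
    have : A (phi f - h).
      by apply: colA; have -> : (phi f - h) * 'X_[m] = g by rewrite mulrBl E addrK.
    by move=> H; exact: (proj2 (id_diff HA H) Ah).
  move=> g /EB [g0 [h [Ig0 [Bh ->]]]].
  have [f Hf] := Hsurj h Bh.
  exists f; exists g0, (h - phi f); split=> //; split=> //; ring.
- move=> b; have [c Hc] := Hdeg b.
  case Hpos : [forall i, (0 <= (b i)%:Z + a i)%R].
    exists c; rewrite monoZ_shift //.
    exists 0, (phi 'X_[b] - c *: monoZ K (fun i => (b i)%:Z + a i)).
    split; first exact: id0.
    by split=> //; rewrite add0r mulrBl scalerAl.
  exists 0; rewrite scale0r subr0.
  exists 0, (phi 'X_[b]); split; first exact: id0.
  split; last by rewrite add0r.
  by move: Hc; rewrite monoZ_neg ?Hpos // scaler0 subr0.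
Qed.


Lemma clean_prime I : monomial_ideal I -> proper_idealS I -> prime_idealS I -> clean I.
Proof.
move=> HI Hpr Hp; have HId := mono_ideal HI.
exists 1%N, (fun i f => if i == 0%N then I f else True), (fun _ => I), (fun _ _ => 0).
split.
- by [].
- by [].
- case=> [|[|i]] // _ /=; first exact: mono_graded.
  by split=> //; split.
- case=> // _; split; first exact: HI.
    by split=> // Q _ IQ QI.
  exists id; split=> /=.
  + by [].
  + by move=> f g; rewrite subrr; apply: id0.
  + by move=> f g; rewrite subrr; apply: id0.
  + split=> //; move=> g _; exists g; rewrite subrr; exact: id0.
  + by move=> b; exists 1; rewrite monoZ_id scale1r subrr; apply: id0.
Qed.

Lemma clean_step I m : monomial_ideal I -> proper_idealS I -> no_embedded I ->
  cleaner I m -> clean (colon_mono I m) -> clean (sum_mono I m) -> clean I.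
Proof.
move=> HI Hpr Hne [mn0 nIu minsum] [r1 [J1 [P1 [a1 C1]]]] [r2 [J2 [P2 [a2 C2]]]].
have HId := mono_ideal HI.
have r1pos : (0 < r1)%N.
  case: r1 C1 => // C1; exfalso; apply: nIu; case: C1 => H0 Hr _ _ _.
  by have := proj1 (H0 1) (Hr 1); rewrite /colon_mono mul1r.
have colJ1 : forall i, (i <= r1)%N -> forall f, I (f * 'X_[m]) -> J1 i f.
  move=> i Hi f Hf; apply: (chain_incl C1 (leq0n i) Hi); case: C1 => H0 _ _ _ _; exact/H0.
have J20 : forall f, J2 0%N f <-> sum_mono I m f by case: C2.
exists (r1 + r2)%N,
  (fun i f => if (i < r1)%N then sumJ I (J1 i) m f else J2 (i - r1)%N f),
  (fun i => if (i < r1)%N then P1 i else P2 (i - r1)%N),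
  (fun i => if (i < r1)%N then (fun j => a1 i j + (m j)%:Z) else a2 (i - r1)%N).
split.
- move=> f; rewrite /= r1pos; split.
    move=> [g [h [Ig [Jh ->]]]]; apply: idD => //.
    by case: C1 => H0 _ _ _ _; apply/H0.
  move=> If; exists f, 0; split=> //; split; last by rewrite mul0r addr0.
  apply: id0; exact: chain_ideal C1 (leq0n r1).
- move=> f /=; rewrite ltnNge leq_addr /= addKn; by case: C2.
- move=> i Hi /=; case: (ltnP i r1) => Hi1.
    apply: sumJ_graded; first exact: mono_graded.
    by case: C1 => _ _ HG _ _; apply: HG; apply: ltnW.
  by case: C2 => _ _ HG _ _; apply: HG; lia.
- move=> i Hi f /=; case: (ltnP i.+1 r1) => H1.
    rewrite (ltnW H1) => -[g [h [Ig [Jh ->]]]]; exists g, h; split=> //; split=> //.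
    by case: C1 => _ _ _ HI1 _; apply: (HI1 i (ltnW H1)).
  case: (ltnP i r1) => Hi1.
    have -> : (i.+1 - r1 = 0)%N by lia.
    by move=> [g [h [Ig [Jh ->]]]]; apply/J20; exists g, h.
  have -> : (i.+1 - r1 = (i - r1).+1)%N by lia.
  by case: C2 => _ _ _ HI2 _; apply: HI2; lia.
- move=> i Hi /=; case: (ltnP i r1) => Hi1.
    have [Pp mincol _ Gi] := chain_P C1 Hi1.
    split.
    + by case: C1 => _ _ _ _ /(_ i Hi1) [].
    + apply/Hne; have [HP' [g Hg]] := ass_of_min C1 mincol.
      by split=> //; exists (g * 'X_[m]) => f; rewrite Hg /colon_mono mulrA.
    + apply: (iso_shift (B := J1 i.+1)) => //.
      * exact: chain_ideal C1 (ltnW Hi1).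
      * exact: colJ1 (ltnW Hi1).
      * move=> f; case: ifP => H2 //.
        have Ei : i.+1 = r1 by move/negbT: H2; rewrite -leqNgt => H3; lia.
        rewrite Ei subnn J20; split.
          move=> [g [h [Ig ->]]]; exists g, h; split=> //; split=> //.
          by case: C1 => _ Hr _ _ _; exact: Hr.
        by move=> [g [h [Ig [_ ->]]]]; exists g, h.
  have -> : (i.+1 < r1)%N = false by apply/negbTE; rewrite -leqNgt; lia.
  have -> : (i.+1 - r1 = (i - r1).+1)%N by lia.
  have Hj : (i - r1 < r2)%N by lia.
  case: C2 => _ _ _ _ /(_ _ Hj) [Hm Hmin Hg]; split=> //.
  exact: minsum.
Qed.

Lemma dirA k I : kclean k I -> clean I.
Proof.
elim=> {I} I.
  by move=> HI Hpr Hp; apply: clean_prime.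
move=> m HI Hpr Hne Hcl _ _ IH1 _ IH2; exact: clean_step HI Hpr Hne Hcl IH1 IH2.
Qed.

End Pf.

Theorem theorem2p4 (K : fieldType) (n : nat) (I : {mpoly K[n]} -> Prop) :
  monomial_ideal I -> proper_idealS I ->
  ((exists k : nat, kclean k I) -> clean I) /\
  (clean I -> exists k : nat, kclean k I).
Proof.
move=> HI Hpr; split.
  by move=> [k Hk]; exact: dirA Hk.
move=> [r [J [P [a C]]]]; exists n; exact: dirB HI Hpr C.
Qed.
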